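(* Let $\mathbf z,\mathbf w$ be jointly distributed $M$-dimensional random vectors whose components have finite positive variance, with standardized versions $\mathbf z',\mathbf w'$, and assume $\boldsymbol\Sigma_{\mathbf z'\mathbf z'}$ and $\boldsymbol\Sigma_{\mathbf z'\mathbf w'}$ are full rank. Then $$m_{\mathrm{SVD}}(\mathbf z,\mathbf w)\ \ge\ 1-\sqrt{M\sum_{l=1}^M\mathrm{Var}[z'_l-w'_l]},$$ where the variance is over the joint distribution of $(\mathbf z',\mathbf w')$.
   Context: For $M$-dimensional random vectors $\mathbf z,\mathbf w$ (jointly distributed, components with finite positive variance), let $\mathbf z',\mathbf w'$ be the standardized vectors $z'_i=(z_i-\mathbb E[z_i])/\operatorname{std}(z_i)$, $w'_i=(w_i-\mathbb E[w_i])/\operatorname{std}(w_i)$, and let $\boldsymbol\Sigma_{\mathbf z'\mathbf w'}$ be the cross-covariance matrix with entries $\mathrm{Cov}[z'_i,w'_j]$ (and $\boldsymbol\Sigma_{\mathbf z'\mathbf z'}$ the covariance matrix of $\mathbf z'$). Let $\{\mathbf u_i\}_{i=1}^M$, $\{\mathbf v_i\}_{i=1}^M$ be the left and right singular vectors of $\boldsymbol\Sigma_{\mathbf z'\mathbf w'}$. Define $m_{\mathrm{SVD}}(\mathbf z,\mathbf w)=\frac1M\sum_{i=1}^M\mathrm{Cov}[\mathbf u_i^\top\mathbf z',\mathbf v_i^\top\mathbf w']$ (equivalently, $\frac1M$ times the sum of the singular values of $\boldsymbol\Sigma_{\mathbf z'\mathbf w'}$) and $d_{\mathrm{SVD}}(\mathbf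 z,\mathbf w)=1-m_{\mathrm{SVD}}(\mathbf z,\mathbf w)$. *)

(* Defs.v *)
From HB Require Import structures.
From mathcomp Require Import all_boot all_order all_algebra.
From mathcomp Require Import all_classical all_reals all_analysis.
Set Implicit Arguments. Unset Strict Implicit. Unset Printing Implicit Defensive.
Import Order.TTheory GRing.Theory Num.Theory.
Local Open Scope ring_scope.

Section svd_defs.
Context {d : measure_display} {T : measurableType d} {R : realType}.

Definition standardize (P : probability T R) (X : T -> R) : T -> R :=
  fun t => (X t - fine 'E_P[X]) / Num.sqrt (fine 'V_P[X]).

Definition cross_cov (P : probability T R) (M : nat) (z w : 'I_M -> T -> R)
  : 'M[R]_M := \matrix_(i, j) fine (covariance P (z i) (w j)).
End svd_defs.

Definition is_svd {R : realType} (M : nat) (A U V : 'M[R]_M) (s : 'rV[R]_M) :=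
  [/\ U^T *m U = 1%:M, V^T *m V = 1%:M, (forall i, 0 <= s 0 i)
    & A = U *m diag_mx s *m V^T].

Definition m_SVD_of {R : realType} (M : nat) (s : 'rV[R]_M) : R :=
  M%:R^-1 * \sum_(i < M) s 0 i.

(* Main.v *)
Require Import Defs.
From HB Require Import structures.
From mathcomp Require Import all_boot all_order all_algebra.
From mathcomp Require Import all_classical all_reals all_analysis.
From mathcomp Require Import ring lra.
Import Order.TTheory GRing.Theory Num.Theory.
Local Open Scope ring_scope.
Section S.
Context (d : measure_display) (T : measurableType d) (R : realType) (P : probability T R).

Lemma standardizeE (X : T -> R) : standardize P X =
  ((Num.sqrt (fine 'V_P[X]))^-1 \o* (X \- cst (fine 'E_P[X])))%R.
Proof. by apply/funext => t; rewrite /standardize /= mulrC. Qed.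

Lemma std_L2 (X : T -> R) : X \in Lfun P 2%:E -> standardize P X \in Lfun P 2%:E.
Proof.
move=> X2; rewrite standardizeE; apply: Lfun_scale; first by rewrite ler1n.
apply: rpredB => //; first by rewrite lee1n. by move=> ?; exact: (Lfun_cst P (fine (expectation P X)) 2).
Qed.

Lemma std_V (X : T -> R) : X \in Lfun P 2%:E -> (0 < 'V_P[X])%E ->
  'V_P[standardize P X] = 1%E.
Proof.
move=> X2 V0.
have Xc : (X \- cst (fine 'E_P[X]))%R \in Lfun P 2%:E.
  apply: rpredB => //; first by rewrite lee1n.
  by move=> ?; exact: (Lfun_cst P (fine (expectation P X)) 2).
rewrite standardizeE (varianceZ _ Xc) (varianceB_cst_r _ X2).
have Vf := variance_fin_num X2.
rewrite -(fineK Vf) -EFinM; congr (_%:E).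
have h : 0 < fine 'V_P[X].
  by rewrite -lte_fin fineK.
by rewrite exprVn sqr_sqrtr ?ltW // mulVf // gt_eqF.
Qed.

Lemma std_cov (X Y : T -> R) : X \in Lfun P 2%:E -> (0 < 'V_P[X])%E ->
  Y \in Lfun P 2%:E -> (0 < 'V_P[Y])%E ->
  fine (covariance P (standardize P X) (standardize P Y)) =
  1 - fine 'V_P[(standardize P X \- standardize P Y)%R] / 2.
Proof.
move=> X2 VX Y2 VY.
have X'2 := std_L2 _ X2; have Y'2 := std_L2 _ Y2.
have Pfin : P setT \is a fin_num := fin_num_measure P _ measurableT.
have cf : covariance P (standardize P X) (standardize P Y) \is a fin_num.
  exact: (covariance_fin_num (Lfun_subset12 Pfin X'2) (Lfun_subset12 Pfin Y'2) (Lfun2_mul_Lfun1 X'2 Y'2)).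
rewrite varianceB // std_V // std_V //.
rewrite -(fineK cf) -EFinM -EFinD /=.
set c := fine _.
by field.
Qed.
End S.
Lemma svd_trace_le (R : realType) (M : nat) (A U V : 'M[R]_M) (s : 'rV[R]_M) :
  is_svd A U V s -> \sum_(i < M) A i i <= \sum_(i < M) s 0 i.
Proof.
case=> hU hV hs ->.
have E : forall i, (U *m diag_mx s *m V^T) i i = \sum_k s 0 k * (U i k * V i k).
  move=> i; rewrite mul_mx_diag !mxE; apply: eq_bigr => k _.
  by rewrite !mxE; ring.
under eq_bigr do rewrite E.
rewrite exchange_big /=; apply: ler_sum => k _.
rewrite -mulr_sumr -[leRHS]mulr1; apply: ler_wpM2l => //.
have cU : \sum_i U i k * U i k = 1.
  transitivity ((U^T *m U) k k); last by rewrite hU mxE eqxx.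
  by rewrite mxE; apply: eq_bigr => i _; rewrite !mxE.
have cV : \sum_i V i k * V i k = 1.
  transitivity ((V^T *m V) k k); last by rewrite hV mxE eqxx.
  by rewrite mxE; apply: eq_bigr => i _; rewrite !mxE.
apply: (@le_trans _ _ (\sum_i (U i k * U i k + V i k * V i k) / 2)).
  apply: ler_sum => i _.
  have := sqr_ge0 (U i k - V i k); rewrite -subr_ge0; lra.
rewrite -mulr_suml big_split /= cU cV; lra.
Qed.

Theorem mainTheorem9 (d : measure_display) (T : measurableType d)
  (R : realType) (P : probability T R) (M : nat) (z w : 'I_M -> T -> R) :
  (0 < M)%N ->
  (forall i, z i \in Lfun P 2%:E) -> (forall i, w i \in Lfun P 2%:E) ->
  (forall i, (0 < 'V_P[z i])%E) -> (forall i, (0 < 'V_P[w i])%E) ->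
  \rank (cross_cov P (fun i => standardize P (z i))
                     (fun i => standardize P (z i))) = M ->
  \rank (cross_cov P (fun i => standardize P (z i))
                     (fun i => standardize P (w i))) = M ->
  forall (U V : 'M[R]_M) (s : 'rV[R]_M),
  is_svd (cross_cov P (fun i => standardize P (z i))
                      (fun i => standardize P (w i))) U V s ->
  1 - Num.sqrt (M%:R * \sum_(l < M)
      fine 'V_P[(standardize P (z l) \- standardize P (w l))%R])
    <= m_SVD_of s.
Proof.
move=> M0 z2 w2 zV wV _ _ U V s hsvd.
have htr := @svd_trace_le R M _ _ _ _ hsvd.
set S := \sum_(l < M) _.
have S0 : 0 <= S.
  by apply: sumr_ge0 => l _; apply: fine_ge0; apply: variance_ge0.
have trC : \sum_(i < M) (cross_cov P (fun i => standardize P (z i))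
                      (fun i => standardize P (w i))) i i = M%:R - S / 2.
  under eq_bigr do rewrite mxE std_cov //.
  by rewrite sumrB sumr_const card_ord -mulr_suml.
rewrite trC in htr.
set t := \sum_(i < M) s 0 i in htr *.
have t0 : 0 <= t by apply: sumr_ge0 => i _; case: hsvd.
have M1 : 1 <= M%:R :> R by rewrite ler1n.
have Mp : 0 < M%:R :> R by lra.
rewrite /m_SVD_of -/t ler_pdivlMl //.
set q := Num.sqrt _.
have q0 : 0 <= q by apply: sqrtr_ge0.
have [h|h] := lerP 1 (M%:R * S).
  have q1 : 1 <= q by rewrite -(sqrtr1 R) /q ler_sqrt //; lra.
  nra.
have S1 : S <= 1 by nra.
have qS : S <= q.
  rewrite -(ger0_norm S0) -sqrtr_sqr /q ler_sqrt; last by nra.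
  nra.
nra.
Qed.
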